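(* Let $\mathcal{X}$ be a sample space, $\mathcal{Y}$ a label set, and $y:\mathcal{X}\to\mathcal{Y}$ a deterministic labeling function. Let $p_{\mathrm{sim}}$ be a joint probability distribution on pairs $(x,x^+)\in\mathcal{X}\times\mathcal{X}$, and let $q_{\mathrm{UCL}}$ be a probability distribution on $\mathcal{X}$. Fix $\gamma\in(0,\infty)$, a representation function $f:\mathcal{X}\to S^{d-1}$ (unit sphere in $\mathbb{R}^d$), and set $g(x,x'):=f(x)^\top f(x')/\gamma$. Let $\eta:\mathbb{R}\to\mathbb{R}$ be a hardening function, i.e. nonnegative and nondecreasing on $\mathbb{R}$. For $x\in\mathcal{X}$ define $$\alpha_{\mathrm{H\text{-}UCL}}(x,f):=\mathbb{E}_{x^-\sim q_{\mathrm{UCL}}}[\eta(g(x,x^-))],$$ $$\alpha_{\mathrm{H\text{-}SCL}}(x,f):=\mathbb{E}_{x^-\sim q_{\mathrm{UCL}}}[1(y(x^-)\neq y(x))\,\eta(g(x,x^-))],$$ $$\alpha_{\mathrm{Hcol}}(x,f):=\mathbb{E}_{x^-\sim q_{\mathrm{UCL}}}[1(y(x^-)= y(x))\,\eta(g(x,x^-))],$$ and assume each of these lies in $(0,\infty)$ for all $x\in\mathcal{X}$. Define the conditional distributions $$q_{\mathrm{H\text{-}UCL}}(x^-|x,f)=\frac{\eta(g(x,x^-))\,q_{\mathrm{UCL}}(x^-)}{\alpha_{\mathrm{H\text{-}UCL}}(x,f)},\quad q_{\mathrm{H\text{-}SCL}}(x^-|x,f)=\frac{1(y(x^-)\neq y(x))\,\eta(g(x,x^-))\,q_{\mathrm{UCL}}(x^-)}{\alpha_{\mathrm{H\text{-}SCL}}(x,f)},$$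 $$q_{\mathrm{Hcol}}(x^-|x,f)=\frac{1(y(x^-)= y(x))\,\eta(g(x,x^-))\,q_{\mathrm{UCL}}(x^-)}{\alpha_{\mathrm{Hcol}}(x,f)}.$$ For a conditional negative-sampling distribution $q(\cdot|x)$ define the asymptotic InfoNCE loss $$\mathcal{L}^{(\infty)}_q(f):=\mathbb{E}_{(x,x^+)\sim p_{\mathrm{sim}}}\Big[\log\Big(1+e^{-g(x,x^+)}\,\mathbb{E}_{x^-\sim q(\cdot|x)}\big[e^{g(x,x^-)}\big]\Big)\Big],$$ and write $\mathcal{L}^{(\infty)}_{\mathrm{H\text{-}UCL}}(f)$ and $\mathcal{L}^{(\infty)}_{\mathrm{H\text{-}SCL}}(f)$ for this loss with $q=q_{\mathrm{H\text{-}UCL}}(\cdot|x,f)$ and $q=q_{\mathrm{H\text{-}SCL}}(\cdot|x,f)$ respectively. Suppose that for all $x\in\mathcal{X}$, $$\mathbb{E}_{x^-\sim q_{\mathrm{Hcol}}(\cdot|x,f)}\big[e^{g(x,x^-)}\big]\;\geq\;\mathbb{E}_{x^-\sim q_{\mathrm{H\text{-}SCL}}(\cdot|x,f)}\big[e^{g(x,x^-)}\big].$$ Then $\mathcal{L}^{(\infty)}_{\mathrm{H\text{-}UCL}}(f)\geq \mathcal{L}^{(\infty)}_{\mathrm{H\text{-}SCL}}(f)$.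
   Context: $1(\mathcal{E})$ denotes the indicator of event $\mathcal{E}$. The loss $\mathcal{L}^{(\infty)}_q(f)$ is the limit as $k\to\infty$ of the InfoNCE contrastive loss $\mathbb{E}_{(x,x^+)\sim p_{\mathrm{sim}}}\mathbb{E}_{x^-_{1:k}\text{ iid}\sim q(\cdot|x)}\big[\log\big(1+e^{-g(x,x^+)}\tfrac1k\sum_{j=1}^k e^{g(x,x^-_j)}\big)\big]$ with $k$ negative samples; $x$ is the anchor, $x^+$ the positive sample, $x^-$ negative samples. *)

(* Defs.v *)
From HB Require Import structures.
From mathcomp Require Import all_boot all_order all_algebra.
From mathcomp Require Import all_classical all_reals all_analysis.
Set Implicit Arguments. Unset Strict Implicit. Unset Printing Implicit Defensive.
Import Order.TTheory GRing.Theory Num.Theory.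
Local Open Scope classical_set_scope.
Local Open Scope ring_scope.

Section Defs.
Context {R : realType} {d : nat} {dX : measure_display} {X : measurableType dX}.

Definition simg (gamma : R) (f : X -> 'rV[R]_d) (x x' : X) : R :=
  (\sum_(i < d) f x 0 i * f x' 0 i) / gamma.

Definition on_sphere (v : 'rV[R]_d) : Prop := \sum_(i < d) v 0 i ^+ 2 = 1.

Definition alpha_HUCL (q : probability X R) gamma f (eta : R -> R) (x : X) : \bar R :=
  (\int[q]_(x' in setT) (eta (simg gamma f x x'))%:E)%E.
Definition alpha_HSCL {Y : Type} (y : X -> Y) (q : probability X R) gamma f
  (eta : R -> R) (x : X) : \bar R :=
  (\int[q]_(x' in setT)
     (\1_[set z | y z <> y x] x' * eta (simg gamma f x x'))%:E)%E.
Definition alpha_Hcol {Y : Type} (y : X -> Y) (q : probability X R) gamma f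
  (eta : R -> R) (x : X) : \bar R :=
  (\int[q]_(x' in setT)
     (\1_[set z | y z = y x] x' * eta (simg gamma f x x'))%:E)%E.

(* densities of the conditional negative distributions w.r.t. q_UCL:
   q_H(x^-|x,f) = (weight * eta(g(x,x^-)) * q_UCL(x^-)) / alpha(x,f) *)
Definition dens_HUCL (q : probability X R) gamma f eta (x x' : X) : R :=
  eta (simg gamma f x x') / fine (alpha_HUCL q gamma f eta x).
Definition dens_HSCL {Y : Type} (y : X -> Y) (q : probability X R) gamma f eta
  (x x' : X) : R :=
  \1_[set z | y z <> y x] x' * eta (simg gamma f x x') /
    fine (alpha_HSCL y q gamma f eta x).
Definition dens_Hcol {Y : Type} (y : X -> Y) (q : probability X R) gamma f eta
  (x x' : X) : R :=
  \1_[set z | y z = y x] x' * eta (simg gamma f x x') /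
    fine (alpha_Hcol y q gamma f eta x).

Definition cond_expect (q : probability X R) (dens : X -> X -> R) (x : X)
  (h : X -> R) : \bar R :=
  (\int[q]_(x' in setT) (dens x x' * h x')%:E)%E.

Definition infoNCE_inf (psim : probability (X * X)%type R) (q : probability X R)
  gamma f (dens : X -> X -> R) : \bar R :=
  (\int[psim]_(z in setT)
     (ln (1 + expR (- simg gamma f z.1 z.2) *
        fine (cond_expect q dens z.1 (fun x' => expR (simg gamma f z.1 x')))))%:E)%E.

End Defs.

(* Main.v *)
Require Import Defs.
From HB Require Import structures.
From mathcomp Require Import all_boot all_order all_algebra.
From mathcomp Require Import all_classical all_reals all_analysis.
From mathcomp Require Import ring lra.
From mathcomp Require Import measurable_realfun lebesgue_integral.
Import Order.TTheory GRing.Theory Num.Theory.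
Local Open Scope classical_set_scope.
Local Open Scope ring_scope.

Import HBNNSimple.

Lemma le_integral_nomeas (dT : measure_display) (T : measurableType dT) (R : realType)
  (mu : {measure set T -> \bar R}) (f g : T -> \bar R) :
  (forall x, (0 <= f x)%E) -> (forall x, (f x <= g x)%E) ->
  (\int[mu]_(x in setT) f x <= \int[mu]_(x in setT) g x)%E.
Proof.
move=> f0 fg.
have g0 x : (0 <= g x)%E by apply: le_trans (f0 x) (fg x).
rewrite !ge0_integralTE//.
apply: ereal_sup_le => _ [h hf <-]; exists h => //= x.
exact: le_trans (hf x) (fg x).
Qed.

Lemma simg_le1 (R : realType) (d : nat) (dX : measure_display)
  (X : measurableType dX) (gamma : R) (f : X -> 'rV[R]_d) x x' :
  0 < gamma -> on_sphere (f x) -> on_sphere (f x') ->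
  simg gamma f x x' <= gamma^-1.
Proof.
move=> g0 s1 s2; rewrite /simg -[X in _ <= X]mul1r.
apply: ler_wpM2r; first by rewrite invr_ge0 ltW.
suff : 2 * (\sum_(i < d) f x 0 i * f x' 0 i) <= 2 by lra.
  rewrite mulr_sumr.
  have e : \sum_(i < d) (f x 0 i ^+ 2 + f x' 0 i ^+ 2) = 2.
    by rewrite big_split /= s1 s2.
  rewrite -[in X in _ <= X]e.
  apply: ler_sum => i _.
  have := sqr_ge0 (f x 0 i - f x' 0 i); rewrite sqrrB; lra.
Qed.

Section key.
Context (R : realType) (d : nat) (dX : measure_display)
  (X : measurableType dX) (Y : Type) (y : X -> Y)
  (q : probability X R)
  (gamma : R) (f : X -> 'rV[R]_d) (eta : R -> R).
Hypotheses (gamma0 : 0 < gamma) (sph : forall x, on_sphere (f x))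
  (mf : forall i : 'I_d, measurable_fun setT (fun x => f x 0 i))
  (my : forall x : X, measurable [set z | y z = y x])
  (eta0 : forall t, 0 <= eta t) (etah : {homo eta : a b / a <= b}).
Variable x : X.
Hypotheses (aU0 : (0 < alpha_HUCL q gamma f eta x < +oo)%E)
  (aS0 : (0 < alpha_HSCL y q gamma f eta x < +oo)%E)
  (aC0 : (0 < alpha_Hcol y q gamma f eta x < +oo)%E)
  (hSC : (cond_expect q (dens_HSCL y q gamma f eta) x
                 (fun x' => expR (simg gamma f x x'))
              <= cond_expect q (dens_Hcol y q gamma f eta) x
                 (fun x' => expR (simg gamma f x x')))%E).

Let g := simg gamma f x.
Let k x' := eta (g x').
Let ex x' := expR (g x').
Let iN := \1_[set z | y z <> y x] : X -> R.
Let iE := \1_[set z | y z = y x] : X -> R.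

Let mg : measurable_fun setT g.
Proof.
rewrite /g /simg.
apply: (@measurable_realfun.measurable_funM _ _ _ _ (fun x' => \sum_(i < d) f x 0 i * f x' 0 i) (fun _ => gamma^-1)) => //.
apply: measurable_sum => i.
apply: (@measurable_realfun.measurable_funM _ _ _ _ (fun _ => f x 0 i) (fun x' => f x' 0 i)) => //.
Qed.

Let mk : measurable_fun setT k.
Proof.
have h1 := measurable_realfun.nondecreasing_measurable measurableT etah.
exact: measurableT_comp h1 mg.
Qed.

Let mex : measurable_fun setT ex.
Proof. have h := @measurable_realfun.measurable_expR R; exact: measurableT_comp h mg. Qed.

Let miN : measurable_fun setT iN.
Proof. apply: measurable_realfun.measurable_indic; exact: measurableC (my x). Qed.

Let miE : measurable_fun setT iE.
Proof. exact: measurable_realfun.measurable_indic (my x). Qed.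

Let iNE x' : iN x' + iE x' = 1.
Proof.
rewrite /iN /iE !indicE.
have [h|h] := pselect (y x' = y x).
  by rewrite (mem_set (h : [set z | y z = y x] x')) memNset //= add0r.
by rewrite (mem_set (h : [set z | y z <> y x] x')) memNset //= addr0.
Qed.

Let iN0 x' : 0 <= iN x'. Proof. by rewrite /iN indicE. Qed.
Let iE0 x' : 0 <= iE x'. Proof. by rewrite /iE indicE. Qed.

Let M := expR (gamma^-1).
Let exM x' : ex x' <= M.
Proof. by rewrite /ex /M ler_expR; apply: simg_le1. Qed.


Let fin_pos (a : \bar R) : (0 < a < +oo)%E -> a = (fine a)%:E /\ 0 < fine a.
Proof.
move=> /andP[a0 aoo].
have af : a \is a fin_num by rewrite ge0_fin_numE// ltW.
split; first by rewrite fineK.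
by rewrite -lte_fin fineK.
Qed.

Let mEF (h : X -> R) : measurable_fun setT h ->
  measurable_fun setT (EFin \o h).
Proof. by move=> mh; apply/measurable_EFinP. Qed.

Let fin_int (h w : X -> R) : measurable_fun setT w ->
  (forall x', 0 <= h x') -> (forall x', 0 <= w x') ->
  (forall x', h x' <= M * w x') ->
  (\int[q]_(x' in setT) (w x')%:E < +oo)%E ->
  (\int[q]_(x' in setT) (h x')%:E)%E \is a fin_num.
Proof.
move=> mw h0 w0 hw wfin.
rewrite ge0_fin_numE; last by apply: integral_ge0 => x' _; rewrite lee_fin.
apply: (le_lt_trans (y := (\int[q]_(x' in setT) (M%:E * (w x')%:E))%E)).
  by apply: le_integral_nomeas => x'; rewrite ?lee_fin// -EFinM lee_fin.
rewrite ge0_integralZl_EFin//; last 3 first.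
- by move=> x' _; rewrite lee_fin.
- exact: mEF.
- exact: expR_ge0.
by rewrite lte_mul_pinfty// lee_fin expR_ge0.
Qed.

Lemma key_ineq :
  0 <= fine (cond_expect q (dens_HSCL y q gamma f eta) x ex) /\
  fine (cond_expect q (dens_HSCL y q gamma f eta) x ex) <=
  fine (cond_expect q (dens_HUCL q gamma f eta) x ex).
Proof.
have [aUE aU_gt0] := fin_pos _ aU0.
have [aSE aS_gt0] := fin_pos _ aS0.
have [aCE aC_gt0] := fin_pos _ aC0.
set aU := fine (alpha_HUCL q gamma f eta x) in aUE aU_gt0.
set aS := fine (alpha_HSCL y q gamma f eta x) in aSE aS_gt0.
set aC := fine (alpha_Hcol y q gamma f eta x) in aCE aC_gt0.
have k0 x' : 0 <= k x' by apply: eta0.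
have ex0 x' : 0 <= ex x' by apply: expR_ge0.
have mNk : measurable_fun setT (fun x' => iN x' * k x').
  exact: measurable_realfun.measurable_funM.
have mEk : measurable_fun setT (fun x' => iE x' * k x').
  exact: measurable_realfun.measurable_funM.
have mNke : measurable_fun setT (fun x' => iN x' * k x' * ex x').
  exact: measurable_realfun.measurable_funM.
have mEke : measurable_fun setT (fun x' => iE x' * k x' * ex x').
  exact: measurable_realfun.measurable_funM.
have bnd (i : X -> R) x' : 0 <= i x' -> i x' * k x' * ex x' <= M * (i x' * k x').
  by move=> i0; rewrite mulrC ler_wpM2r// mulr_ge0.
have ISf : (\int[q]_(x' in setT) (iN x' * k x' * ex x')%:E)%E \is a fin_num.
  apply: (@fin_int _ (fun x0 => iN x0 * k x0)) => //.
  - by move=> x'; rewrite !mulr_ge0.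
  - by move=> x'; rewrite mulr_ge0.
  - by move=> x'; apply: bnd.
  - by case/andP: aS0.
have ICf : (\int[q]_(x' in setT) (iE x' * k x' * ex x')%:E)%E \is a fin_num.
  apply: (@fin_int _ (fun x0 => iE x0 * k x0)) => //.
  - by move=> x'; rewrite !mulr_ge0.
  - by move=> x'; rewrite mulr_ge0.
  - by move=> x'; apply: bnd.
  - by case/andP: aC0.
set IS := (\int[q]_(x' in setT) (iN x' * k x' * ex x')%:E)%E in ISf.
set IC := (\int[q]_(x' in setT) (iE x' * k x' * ex x')%:E)%E in ICf.
have IUE : (\int[q]_(x' in setT) (k x' * ex x')%:E = IS + IC)%E.
  rewrite /IS /IC -ge0_integralD//; last 4 first.
  - by move=> x' _; rewrite lee_fin !mulr_ge0.
  - exact: mEF.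
  - by move=> x' _; rewrite lee_fin !mulr_ge0.
  - exact: mEF.
  apply: eq_integral => x' _; rewrite -EFinD; congr EFin.
  by rewrite -!mulrA -mulrDl iNE mul1r.
have aUSC : aU = aS + aC.
  apply/EFin_inj; rewrite -aUE EFinD -aSE -aCE.
  rewrite /alpha_HUCL /alpha_HSCL /alpha_Hcol -ge0_integralD//; last 4 first.
  - by move=> x' _; rewrite lee_fin mulr_ge0.
  - exact: mEF.
  - by move=> x' _; rewrite lee_fin mulr_ge0.
  - exact: mEF.
  apply: eq_integral => x' _; rewrite -EFinD; congr EFin.
  by rewrite -mulrDl iNE mul1r.
have ES : cond_expect q (dens_HSCL y q gamma f eta) x ex = ((aS^-1)%:E * IS)%E.
  rewrite /cond_expect /IS -ge0_integralZl_EFin//; last 3 first.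
  - by move=> x' _; rewrite lee_fin !mulr_ge0.
  - exact: mEF.
  - by rewrite invr_ge0 ltW.
  apply: eq_integral => x' _; rewrite -EFinM; congr EFin.
  rewrite /dens_HSCL -/aS /iN /k /ex /g; ring.
have EC : cond_expect q (dens_Hcol y q gamma f eta) x ex = ((aC^-1)%:E * IC)%E.
  rewrite /cond_expect /IC -ge0_integralZl_EFin//; last 3 first.
  - by move=> x' _; rewrite lee_fin !mulr_ge0.
  - exact: mEF.
  - by rewrite invr_ge0 ltW.
  apply: eq_integral => x' _; rewrite -EFinM; congr EFin.
  rewrite /dens_Hcol -/aC /iE /k /ex /g; ring.
have EU : cond_expect q (dens_HUCL q gamma f eta) x ex = ((aU^-1)%:E * (IS + IC))%E.
  rewrite -IUE /cond_expect -ge0_integralZl_EFin//; last 3 first.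
  - by move=> x' _; rewrite lee_fin !mulr_ge0.
  - by apply: mEF; exact: measurable_realfun.measurable_funM.
  - by rewrite invr_ge0 ltW.
  apply: eq_integral => x' _; rewrite -EFinM; congr EFin.
  rewrite /dens_HUCL -/aU /k /ex /g; ring.
have hSC' := hSC; rewrite -/g -/ex ES EC in hSC'.
rewrite ES EU.
rewrite -(fineK ISf) -(fineK ICf) -EFinD -!EFinM /= in hSC' *.
rewrite lee_fin in hSC'.
have JS0 : 0 <= fine IS by rewrite fine_ge0// integral_ge0// => x' _; rewrite lee_fin !mulr_ge0.
split; first by rewrite mulr_ge0// invr_ge0 ltW.
rewrite aUSC.
set u := aS^-1 * fine IS in hSC' *.
set v := aC^-1 * fine IC in hSC'.
have -> : fine IS = u * aS by rewrite /u mulrAC mulVf ?mul1r // gt_eqF.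
have -> : fine IC = v * aC by rewrite /v mulrAC mulVf ?mul1r // gt_eqF.
rewrite ler_pdivlMl ?addr_gt0//.
nra.
Qed.

End key.

Theorem lemma1 (R : realType) (d : nat) (dX : measure_display)
  (X : measurableType dX) (Y : Type) (y : X -> Y)
  (psim : probability (X * X)%type R) (q : probability X R)
  (gamma : R) (f : X -> 'rV[R]_d) (eta : R -> R) :
  0 < gamma ->
  (forall x, on_sphere (f x)) ->
  (forall i : 'I_d, measurable_fun setT (fun x => f x 0 i)) ->
  (forall x : X, measurable [set z | y z = y x]) ->
  (forall t, 0 <= eta t) ->
  {homo eta : a b / a <= b} ->
  (forall x, (0 < alpha_HUCL q gamma f eta x < +oo)%E) ->
  (forall x, (0 < alpha_HSCL y q gamma f eta x < +oo)%E) ->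
  (forall x, (0 < alpha_Hcol y q gamma f eta x < +oo)%E) ->
  (forall x, (cond_expect q (dens_HSCL y q gamma f eta) x
                 (fun x' => expR (simg gamma f x x'))
              <= cond_expect q (dens_Hcol y q gamma f eta) x
                 (fun x' => expR (simg gamma f x x')))%E) ->
  (infoNCE_inf psim q gamma f (dens_HSCL y q gamma f eta)
     <= infoNCE_inf psim q gamma f (dens_HUCL q gamma f eta))%E.

Proof.
move=> g0 sph mf my eta0 etah aU aS aC hSC.
rewrite /infoNCE_inf.
apply: le_integral_nomeas => z.
- have [h0 _] := @key_ineq _ _ _ _ _ y q gamma f eta g0 sph mf my eta0 etah z.1 (aU z.1) (aS z.1) (aC z.1) (hSC z.1).
  by rewrite lee_fin; apply: ln_ge0; rewrite lerDl mulr_ge0 ?expR_ge0.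
- have [h0 h1] := @key_ineq _ _ _ _ _ y q gamma f eta g0 sph mf my eta0 etah z.1 (aU z.1) (aS z.1) (aC z.1) (hSC z.1).
  have p1 : 0 < 1 + expR (- simg gamma f z.1 z.2) *
      fine (cond_expect q (dens_HSCL y q gamma f eta) z.1
        (fun x' => expR (simg gamma f z.1 x'))).
    by rewrite ltr_pwDl// mulr_ge0 ?expR_ge0.
  have p2 : 0 < 1 + expR (- simg gamma f z.1 z.2) *
      fine (cond_expect q (dens_HUCL q gamma f eta) z.1
        (fun x' => expR (simg gamma f z.1 x'))).
    by rewrite ltr_pwDl// mulr_ge0 ?expR_ge0// (le_trans h0 h1).
  rewrite lee_fin ler_ln ?posrE//.
  by rewrite lerD2l ler_wpM2l ?expR_ge0.
Qed.
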